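(* Fix an integer $k\ge0$. Then $n\mapsto p_S(n,n+k)$ is increasing on the integers $n\ge k$: for all integers $n_2>n_1\ge k$, $p_S(n_1,n_1+k)<p_S(n_2,n_2+k)$.
   Context: For integers $n,m$, $p_S(n,m)$ is the number of $(x_1,x_2,x_3,x_4)\in\mathbb{Z}_{\ge0}^4$ with $x_1+x_3+x_4=n$ and $x_2+x_3+2x_4=m$ (the number of vector partitions of $(n,m)$ with parts in $\{(1,0),(0,1),(1,1),(1,2)\}$). *)

(* Defs.v *)
From mathcomp Require Import all_boot.
Set Implicit Arguments. Unset Strict Implicit. Unset Printing Implicit Defensive.

(* Every solution has all coordinates <= n + m, so we count
   inside the finite box 'I_(n+m+1)^4 (no solutions are lost). *)
Definition pS (n m : nat) : nat :=
  #|[set x : 'I_(n + m).+1 * 'I_(n + m).+1 * 'I_(n + m).+1 * 'I_(n + m).+1 |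
      let: (x1, x2, x3, x4) := x in
      ((x1 + x3 + x4 == n) && (x2 + x3 + 2 * x4 == m))%N]|.

(* Main.v *)
Require Import Defs.
From mathcomp Require Import all_boot.
From mathcomp Require Import zify.

Lemma step n m : n <= m <= n.*2.+1 -> pS n m < pS n.+1 m.+1.
Proof.
move=> /andP[Hnm Hm2].
rewrite /pS.
set N := (n + m).
set N' := (n.+1 + m.+1).
have HN : N.+1 <= N' by rewrite /N /N'; lia.
pose g (a : 'I_N.+1) (s : nat) : 'I_N'.+1 := inord (a + s).
have gK : forall a s, s <= 1 -> val (g a s) = a + s.
  move=> a s Hs; rewrite /g /= inordK //; have := ltn_ord a; lia.
pose f (x : 'I_N.+1 * 'I_N.+1 * 'I_N.+1 * 'I_N.+1) :=
  let: (a, b, c, d) := x in (g a 1, g b 1, g c 0, g d 0).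
have finj : injective f.
  move=> [[[a b] c] d] [[[a' b'] c'] d'] /= [].
  move=> /(congr1 val); rewrite !gK // => E1.
  move=> /(congr1 val); rewrite !gK // => E2.
  move=> /(congr1 val); rewrite !gK // => E3.
  move=> /(congr1 val); rewrite !gK // => E4.
  have -> : a = a' by apply/val_inj => /=; lia.
  have -> : b = b' by apply/val_inj => /=; lia.
  have -> : c = c' by apply/val_inj => /=; lia.
  have -> : d = d' by apply/val_inj => /=; lia.
  by [].
set A := [set x : _ | _].
set B := [set x : _ | _].
rewrite -(card_imset A finj).
apply: proper_card.
apply/properP; split.
  apply/subsetP => y /imsetP [[[[a b] c] d] Ha ->].
  move: Ha; rewrite !inE /= !gK // => /andP[/eqP E1 /eqP E2].
  apply/andP; split; apply/eqP; lia.
exists (inord 0, inord 0, inord (n.+1 - (m - n)), inord (m - n)).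
  rewrite inE /=.
  rewrite !inordK; try (rewrite /N'; lia).
apply/imsetP => -[[[[a b] c] d] _ /= []].
move=> /(congr1 val); rewrite gK // /= inordK //=; lia.
Qed.

Theorem lemmaA3 (k n1 n2 : nat) : k <= n1 -> n1 < n2 ->
  pS n1 (n1 + k) < pS n2 (n2 + k).
Proof.
move=> Hk; elim: n2 => [|n2 IH] //= Hlt.
have Hs : pS n2 (n2 + k) < pS n2.+1 (n2.+1 + k).
  rewrite addSn; apply: step; apply/andP; split; first lia.
  have : n1 <= n2 by lia. lia.
have [E|Hlt2] := eqVneq n1 n2; first by rewrite E.
have Hlt3 : n1 < n2 by lia.
exact: ltn_trans (IH Hlt3) Hs.
Qed.
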